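(* Let $a=(a_{31}a_{30}\cdots a_{0})_2$ be an IEEE 754 \textbf{binary32} (normalized) floating-point number, so that $$a=(-1)^{a_{31}}\times 2^{(a_{30}a_{29}\cdots a_{23})_2-127}\times\Big(1+\sum_{i=1}^{23}a_{23-i}2^{-i}\Big).$$ Let $p\in[0,1]$, and let $\tilde a$ be the number obtained from $a$ by keeping the sign bit $a_{31}$ and the exponent bits $a_{30},\dots,a_{23}$ unchanged and flipping each of the 23 fraction bits $a_{22},\dots,a_0$ independently with probability $p$. Then the mean of the decimal value of $\tilde a$ is $$\mathbb{E}(\tilde a)=(1-2p)\,a+(-1)^{a_{31}}\,2^{(a_{30}a_{29}\cdots a_{23})_2-127}\Big(2p+\sum_{i=1}^{23}2^{-i}p\Big),$$ and its variance is $$\mathrm{Var}(\tilde a)=\frac{1-4^{-23}}{3}\,p(1-p)\,2^{2(a_{30}a_{29}\cdots a_{23})_2-254}.$$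
   Context: $(b_k\cdots b_0)_2$ denotes the nonnegative integer (or, after a binary point, the binary fraction) with binary digits $b_k,\dots,b_0$. In \textbf{binary32}, $a_{31}$ is the sign bit, $a_{30}\cdots a_{23}$ are the 8 exponent bits and $a_{22}\cdots a_0$ are the 23 fraction bits, with an implicit leading 1 before the binary point. *)

(* Defs.v *)
From HB Require Import structures.
From mathcomp Require Import all_boot all_order all_algebra.
Set Implicit Arguments. Unset Strict Implicit. Unset Printing Implicit Defensive.
Import Order.TTheory GRing.Theory Num.Theory.
Local Open Scope ring_scope.

(* A binary32 word: bits a_0 .. a_31 (a_31 sign, a_30..a_23 exponent, a_22..a_0 fraction). *)
Definition bits32 := {ffun 'I_32 -> bool}.

Definition expo (a : bits32) : nat := (\sum_(j < 8) a (inord (23 + j)) * 2 ^ j)%N.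

Definition normalized (a : bits32) : Prop := (0 < expo a < 255)%N.

Definition b32val (R : realFieldType) (a : bits32) : R :=
  (-1) ^+ a (inord 31) * (2%:R : R) ^ (Posz (expo a) - 127%:Z)
  * (1 + \sum_(1 <= i < 24) (a (inord (23 - i)))%:R * (2%:R : R) ^- i).

Definition flip (a : bits32) (f : {ffun 'I_23 -> bool}) : bits32 :=
  [ffun j : 'I_32 => if (j < 23)%N then a j (+) f (inord j) else a j].

Definition flip_prob (R : realFieldType) (p : R) (f : {ffun 'I_23 -> bool}) : R :=
  \prod_(k < 23) (if f k then p else 1 - p).

Definition mean_flip (R : realFieldType) (p : R) (a : bits32) : R :=
  \sum_(f : {ffun 'I_23 -> bool}) flip_prob p f * b32val R (flip a f).

Definition var_flip (R : realFieldType) (p : R) (a : bits32) : R :=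
  \sum_(f : {ffun 'I_23 -> bool})
     flip_prob p f * (b32val R (flip a f) - mean_flip p a) ^+ 2.

(* Main.v *)
Require Import Defs.
From HB Require Import structures.
From mathcomp Require Import all_boot all_order all_algebra.
From mathcomp Require Import zify ring.
Import Order.TTheory GRing.Theory Num.Theory.
Set Implicit Arguments. Unset Strict Implicit. Unset Printing Implicit Defensive.
Local Open Scope ring_scope.

Section Gen.
Variables (R : realFieldType) (n : nat) (p : R).
Definition wt (b : bool) : R := if b then p else 1 - p.
Definition Ex (h : bool -> R) : R := p * h true + (1 - p) * h false.
Definition Pf (f : {ffun 'I_n -> bool}) : R := \prod_(k < n) wt (f k).

Lemma Ex_prod (H : 'I_n -> bool -> R) :
  \sum_f Pf f * \prod_i H i (f i) = \prod_i Ex (H i).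
Proof.
rewrite (eq_bigr (fun f : {ffun 'I_n -> bool} => \prod_i (wt (f i) * H i (f i)))); last first.
  by move=> f _; rewrite /Pf big_split.
transitivity (\prod_i \sum_(b : bool) wt b * H i b); last first.
  by apply: eq_bigr => i _; rewrite big_bool.
by rewrite bigA_distr_bigA.
Qed.

Lemma Ex1 (k : 'I_n) (h : bool -> R) : \sum_f Pf f * h (f k) = Ex h.
Proof.
have := Ex_prod (fun i => if i == k then h else fun _ => 1).
rewrite [RHS](bigD1 k) //= eqxx [X in _ = _ * X]big1 ?mulr1; last first.
  by move=> i /negbTE ->; rewrite /Ex !mulr1 addrC subrK.
move=> <-; apply: eq_bigr => f _; congr (_ * _).
by rewrite (bigD1 k) //= eqxx big1 ?mulr1 // => i /negbTE ->.
Qed.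

Lemma Ex2 (k l : 'I_n) (h1 h2 : bool -> R) : k != l ->
  \sum_f Pf f * (h1 (f k) * h2 (f l)) = Ex h1 * Ex h2.
Proof.
move=> kl.
have := Ex_prod (fun i => if i == k then h1 else if i == l then h2 else fun _ => 1).
rewrite [RHS](bigD1 k) //= eqxx [X in _ = _ * X](bigD1 l) 1?eq_sym //= eqxx ifN //.
rewrite [X in _ = _ * (_ * X)]big1 ?mulr1; last first.
  by move=> i /andP[/negbTE -> /negbTE ->]; rewrite /Ex !mulr1 addrC subrK.
move=> <-; apply: eq_bigr => f _; congr (_ * _).
rewrite (bigD1 k) //= eqxx (bigD1 l) 1?eq_sym //= eqxx ifN // big1 ?mulr1 //.
by move=> i /andP[/negbTE -> /negbTE ->].
Qed.

Lemma Ex0 : \sum_f Pf f = 1.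
Proof.
have := Ex_prod (fun _ _ => 1).
rewrite [RHS]big1 => [|i _]; last by rewrite /Ex !mulr1 addrC subrK.
by move=> <-; apply: eq_bigr => f _; rewrite big1 ?mulr1.
Qed.

Lemma ExSum (r : seq nat) (j : nat -> 'I_n) (T : nat -> bool -> R) :
  \sum_f Pf f * \sum_(i <- r) T i (f (j i)) = \sum_(i <- r) Ex (T i).
Proof.
under eq_bigr do rewrite mulr_sumr.
rewrite exchange_big; apply: eq_bigr => i _; exact: Ex1.
Qed.

Lemma ExVar (r : seq nat) (j : nat -> 'I_n) (D : nat -> bool -> R) :
  uniq r -> {in r &, injective j} -> (forall i, i \in r -> Ex (D i) = 0) ->
  \sum_f Pf f * (\sum_(i <- r) D i (f (j i))) ^+ 2
  = \sum_(i <- r) Ex (fun b => D i b ^+ 2).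
Proof.
move=> ur ij D0.
under eq_bigr do rewrite expr2 big_distrlr /= mulr_sumr.
rewrite exchange_big; apply: eq_big_seq => i ir /=.
under eq_bigr do rewrite mulr_sumr.
rewrite exchange_big (bigD1_seq i) //= [X in _ + X]big1_seq ?addr0.
  by rewrite -(Ex1 (j i)); apply: eq_bigr => f _; rewrite expr2.
move=> l /andP[li lr]; rewrite Ex2 ?D0 ?mulr0 //.
by apply: contra li => /eqP /ij -> //.
Qed.
End Gen.

Section Main.
Variables (R : realFieldType) (a : bits32).
Let S : R := (-1) ^+ a (inord 31) * (2%:R : R) ^ (Posz (expo a) - 127%:Z).
Let jj (i : nat) : 'I_23 := inord (23 - i).
Let T (i : nat) (b : bool) : R := (a (inord (23 - i)) (+) b)%:R * (2%:R : R) ^- i.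

Lemma b32val_flip f :
  b32val R (flip a f) = S * (1 + \sum_(1 <= i < 24) T i (f (jj i))).
Proof.
rewrite /b32val /S.
have -> : expo (flip a f) = expo a.
  rewrite /expo; apply: eq_bigr => j _; rewrite ffunE inordK; last by case: j => /= j; lia.
  by have -> : (23 + j < 23)%N = false by lia.
rewrite ffunE inordK //=; congr (_ * (1 + _)).
apply: eq_big_nat => i /andP[i1 i24].
rewrite /T /jj ffunE inordK; last by lia.
by have -> : (23 - i < 23)%N = true by lia.
Qed.

Lemma mean_flipE p :
  mean_flip p a = S * (1 + \sum_(1 <= i < 24) Ex p (T i)).
Proof.
rewrite /mean_flip.
under eq_bigr do rewrite b32val_flip mulrCA mulrDr mulr1.
rewrite -mulr_sumr big_split /=.
by rewrite Ex0 (ExSum p _ jj T).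
Qed.

Lemma geo m : 3%:R * \sum_(1 <= i < m.+1) ((2%:R : R) ^- i) ^+ 2 = 1 - (4%:R : R) ^- m.
Proof.
set y : R := 2%:R^-1.
have hy : 2%:R * y = 1 by rewrite /y divff // pnatr_eq0.
have h4 : (4%:R : R)^-1 = y ^+ 2 by rewrite /y exprVn expr2 -natrM.
elim: m => [|m IH]; first by rewrite big_geq // mulr0 expr0 invr1 subrr.
rewrite big_nat_recr //= mulrDr IH -!exprVn h4 -/y.
have -> : (y ^+ m.+1) ^+ 2 = y ^+ 2 * (y ^+ 2) ^+ m.
  by rewrite -!exprM -exprD; congr (_ ^+ _); lia.
rewrite [in RHS]exprS; set Z := (y ^+ 2) ^+ m.
have : (1 - Z + 3%:R * (y ^+ 2 * Z)) - (1 - y ^+ 2 * Z) = Z * ((2%:R * y) ^+ 2 - 1) by ring.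
by rewrite hy expr1n subrr mulr0 => /eqP; rewrite subr_eq0 => /eqP.
Qed.


Lemma main_aux (p : R) :
  normalized a -> 0 <= p <= 1 ->
  mean_flip p a =
    (1 - 2%:R * p) * b32val R a
    + (-1) ^+ a (inord 31) * (2%:R : R) ^ (Posz (expo a) - 127%:Z)
      * (2%:R * p + \sum_(1 <= i < 24) (2%:R : R) ^- i * p)
  /\
  var_flip p a =
    (1 - (4%:R : R) ^- 23) / 3%:R * (p * (1 - p))
    * (2%:R : R) ^ (2%:Z * Posz (expo a) - 254%:Z).
Proof.
move=> _ _; split.
  rewrite mean_flipE /b32val -/S.
  have -> : \sum_(1 <= i < 24) Ex p (T i) =
     (1 - 2%:R * p) * \sum_(1 <= i < 24) (a (inord (23 - i)))%:R * (2%:R : R) ^- i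
     + \sum_(1 <= i < 24) (2%:R : R) ^- i * p.
    rewrite mulr_sumr -big_split; apply: eq_big_nat => i _.
    by rewrite /Ex /T; case: (a _) => /=; ring.
  ring.
rewrite /var_flip mean_flipE.
pose D i b := T i b - Ex p (T i).
have key f : (b32val R (flip a f) - S * (1 + \sum_(1 <= i < 24) Ex p (T i))) ^+ 2
   = S ^+ 2 * (\sum_(1 <= i < 24) D i (f (jj i))) ^+ 2.
  by rewrite b32val_flip /D sumrB; ring.
under eq_bigr do rewrite key mulrCA.
rewrite -mulr_sumr (@ExVar _ _ p (index_iota 1 24) jj D); first last.
- by move=> i _; rewrite /D /Ex; ring.
- move=> i l; rewrite !mem_index_iota => /andP[i1 i2] /andP[l1 l2].
  move=> /(congr1 val); rewrite /jj /= !inordK; lia.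
- exact: iota_uniq.
have -> : \sum_(1 <= i < 24) Ex p (fun b => D i b ^+ 2)
   = p * (1 - p) * \sum_(1 <= i < 24) ((2%:R : R) ^- i) ^+ 2.
  rewrite mulr_sumr; apply: eq_big_nat => i _.
  by rewrite /D /Ex /T; case: (a _) => /=; ring.
have -> : \sum_(1 <= i < 24) ((2%:R : R) ^- i) ^+ 2 = (1 - (4%:R : R) ^- 23) / 3%:R.
  by rewrite -(geo 23) [_ * _ / _]mulrC mulKf // pnatr_eq0.
have -> : S ^+ 2 = (2%:R : R) ^ (2%:Z * Posz (expo a) - 254%:Z).
  rewrite /S exprMn sqrr_sign mul1r expr2 -expfzDr; last by rewrite pnatr_eq0.
  move: (expo a) => e; congr (_ ^ _); ring.
move: (_ ^ (_ - 254%:Z)) ((1 - _) / 3%:R) => X Y; ring.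
Qed.
End Main.

Theorem lemma1 (R : realFieldType) (a : bits32) (p : R) :
  normalized a -> 0 <= p <= 1 ->
  mean_flip p a =
    (1 - 2%:R * p) * b32val R a
    + (-1) ^+ a (inord 31) * (2%:R : R) ^ (Posz (expo a) - 127%:Z)
      * (2%:R * p + \sum_(1 <= i < 24) (2%:R : R) ^- i * p)
  /\
  var_flip p a =
    (1 - (4%:R : R) ^- 23) / 3%:R * (p * (1 - p))
    * (2%:R : R) ^ (2%:Z * Posz (expo a) - 254%:Z).
Proof. exact: main_aux. Qed.
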